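(* Let $n\ge2$, $v_T=[[1,\dots,n],n+1,\dots,2n-1]\in V_{n,3}$, and for $i\in[n]$ let $v_{R_i}=[[i,n+1,\dots,2n-1],1,\dots,\widehat{i},\dots,n]$. Then \[\eta(v_T)=-\Big(\varphi(v_T)+\sum_{i=1}^n(-1)^{i-1}\varphi(v_{R_i})\Big).\]
   Context: All vector spaces are over $\mathbb C$. $V_{n,3}$ is the $\mathbb C$-span of left-comb brackets $[[x_1,\dots,x_n],y_1,\dots,y_{n-1}]$ with $\{x_i\}\cup\{y_j\}=[2n-1]$, modulo antisymmetry in the $x$'s and separately in the $y$'s; it is identified with $\tilde M^{2^{n-1}1}$ (the span of column tabloids of shape $2^{n-1}1$ modulo antisymmetry within columns) by sending such a bracket to the column tabloid with first column the $x$'s and second column the $y$'s. The map $\varphi:V_{n,3}\to V_{n,3}$ is $\varphi([[x_1,\dots,x_n],y_1,\dots,y_{n-1}])=[[x_1,\dots,x_n],y_1,\dots,y_{n-1}]-\sum_{i=1}^n(-1)^{n-i}[[y_1,\dots,y_{n-1},x_i],x_1,\dots,\widehat{x_i},\dots,x_n]$. The map $\eta$ is the linear map $\eta([t])=(n-1)[t]-\sum_{j=1}^{n-1}\pi^j_{1,1}([t])$, where $\pi^{j}_{1,1}([t])$ is the sum, over all entries $x$ of the first column of $t$, of the column tabloids $[t']$ with $t'$ obtained from $t$ by swapping $x$ with the $j$-th entry of the second column. *)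

(* Defs.v *)
From HB Require Import structures.
From mathcomp Require Import all_boot all_order all_algebra all_field.
Set Implicit Arguments. Unset Strict Implicit. Unset Printing Implicit Defensive.
Import GRing.Theory Num.Theory.
Local Open Scope ring_scope.

(* Model of V_{n,3} = ~M^{2^{n-1}1}: column tabloids with first column x
   (n entries) and second column y (n-1 entries), entries in [2n-1], modulo
   antisymmetry within each column.  The space has a basis given by the
   tabloids with increasing columns, which is indexed by the set of entries of
   the first column.  We embed it in the free vector space over algC on
   subsets of 'I_(2*n) (only n-subsets of {1..2n-1} are used). *)

Notation V n := ({ffun {set 'I_(2 * n)} -> algC^o}).

Definition evec (n : nat) (S : {set 'I_(2 * n)}) : V n :=
  [ffun T => (T == S)%:R].

Definition ninv (s : seq nat) : nat :=
  \sum_(i < size s) \sum_(j < size s | (i < j)%N) (nth 0%N s j < nth 0%N s i)%N.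
Definition sgnseq (s : seq nat) : algC := (-1) ^+ ninv s.

(* the column tabloid [t] whose first column is x and second column is y,
   i.e. the bracket [[x_1..x_n], y_1..y_{n-1}] *)
Definition colt (n : nat) (x y : seq nat) : V n :=
  (sgnseq x * sgnseq y) *: evec [set i : 'I_(2 * n) | val i \in x].

Definition dropi (i : nat) (x : seq nat) : seq nat := take i x ++ drop i.+1 x.

(* phi([[x_1..x_n], y_1..y_{n-1}]) =
     [[x],y] - sum_{i=1}^n (-1)^(n-i) [[y_1..y_{n-1}, x_i], x_1..^x_i..x_n]
   (0-based index i corresponds to paper's i+1, sign (-1)^(n-1-i)) *)
Definition phiV (n : nat) (x y : seq nat) : V n :=
  colt n x y -
  \sum_(i < size x) (-1) ^+ (size x - i.+1) *: colt n (rcons y (nth 0%N x i)) (dropi i x).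

(* pi^j_{1,1}([t]) : sum over entries of the first column, swapped with the
   j-th entry of the second column (0-based j) *)
Definition pij (n : nat) (j : nat) (x y : seq nat) : V n :=
  \sum_(i < size x) colt n (set_nth 0%N x i (nth 0%N y j)) (set_nth 0%N y j (nth 0%N x i)).

Definition etaV (n : nat) (x y : seq nat) : V n :=
  ((size x).-1)%:R *: colt n x y - \sum_(j < size y) pij n j x y.

Definition vT_x (n : nat) : seq nat := iota 1 n.
Definition vT_y (n : nat) : seq nat := iota n.+1 n.-1.
Definition vR_x (n i : nat) : seq nat := i :: iota n.+1 n.-1.
Definition vR_y (n i : nat) : seq nat := rem i (iota 1 n).

(* Main.v *)
Require Import Defs.
From HB Require Import structures.
From mathcomp Require Import all_boot all_order all_algebra all_field.
From mathcomp Require Import zify.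
Import GRing.Theory Num.Theory.

Lemma sum_nth_count (p : pred nat) (s : seq nat) :
  (\sum_(j < size s) p (nth 0%N s j))%N = count p s.
Proof.
elim: s => [|x s IH]; first by rewrite big_ord0.
by rewrite /= big_ord_recl /= IH.
Qed.

Lemma ninv_nil : ninv [::] = 0%N.
Proof. by rewrite /ninv big_ord0. Qed.

Lemma ninv_cons x s : ninv (x :: s) = (count (fun y => y < x) s + ninv s)%N.
Proof.
rewrite /ninv /= big_ord_recl /=; congr (_ + _)%N.
  rewrite big_mkcond /= big_ord_recl /= -sum_nth_count.
  by apply: eq_bigr => j _.
apply: eq_bigr => i _.
rewrite big_mkcond /= big_ord_recl /= add0n [RHS]big_mkcond /=.
by apply: eq_bigr => j _.
Qed.

Lemma ninv_cat s t : ninv (s ++ t) =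
  (ninv s + ninv t + \sum_(x <- s) count (fun y => y < x) t)%N.
Proof.
elim: s => [|x s IH]; first by rewrite ninv_nil big_nil add0n addn0.
rewrite cat_cons !ninv_cons IH count_cat big_cons; lia.
Qed.

Lemma ninv_rcons s x : ninv (rcons s x) = (ninv s + count (fun y => x < y) s)%N.
Proof.
rewrite -cats1 ninv_cat ninv_cons ninv_nil /= addn0.
rewrite addn0; congr (_ + _)%N; elim: s => [|y s IH]; first by rewrite big_nil.
by rewrite big_cons IH /= addn0.
Qed.

Lemma ninv_iota a k : ninv (iota a k) = 0%N.
Proof.
elim: k a => [|k IH] a; first exact: ninv_nil.
rewrite /= ninv_cons IH addn0; apply/eqP; rewrite -leqn0 leqNgt -has_count.
apply/hasP => -[y]; rewrite mem_iota => /andP[h1 _] h2; lia.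
Qed.

Lemma count0 (p : pred nat) s : (forall y, y \in s -> ~~ p y) -> count p s = 0%N.
Proof. move=> h; apply/eqP; rewrite -leqn0 leqNgt -has_count; apply/hasP => -[y /h /negP]; done. Qed.

Lemma countall (p : pred nat) s : (forall y, y \in s -> p y) -> count p s = size s.
Proof. by move=> h; rewrite -[RHS]count_predT; apply: eq_in_count. Qed.

Lemma ninv_cat_lt s t : (forall x y, x \in s -> y \in t -> x < y) ->
  ninv (s ++ t) = (ninv s + ninv t)%N.
Proof.
move=> h; rewrite ninv_cat big_seq big1 ?addn0 // => x xs.
apply: count0 => y yt; rewrite -leqNgt ltnW //; exact: h.
Qed.

Lemma dropi_iota k a m : dropi k (iota a m) = iota a (minn k m) ++ iota (a + k.+1) (m - k.+1).
Proof. by rewrite /dropi take_iota drop_iota. Qed.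

Lemma ninv_dropi_iota k a m : ninv (dropi k (iota a m)) = 0%N.
Proof.
rewrite dropi_iota ninv_cat_lt ?ninv_iota // => x y; rewrite !mem_iota; lia.
Qed.

Lemma set_nth_iota i a m b : (i < m)%N ->
  set_nth 0%N (iota a m) i b = iota a i ++ b :: iota (a + i.+1) (m - i.+1).
Proof.
by move=> im; rewrite set_nthE size_iota im take_iota drop_iota (minn_idPl (ltnW im)).
Qed.

Lemma rem_iota i m : (1 <= i <= m)%N -> rem i (iota 1 m) = dropi i.-1 (iota 1 m).
Proof.
move=> /andP[h1 h2].
rewrite remE; have -> : index i (iota 1 m) = i.-1; last by [].
have e : i = nth 0%N (iota 1 m) i.-1 by rewrite nth_iota; lia.
by rewrite {1}e index_uniq ?iota_uniq // size_iota; lia.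
Qed.

Section Spec.
Variable n : nat.
Hypothesis hn : (2 <= n)%N.

Lemma ninv_b i b : (i < n)%N -> (n < b)%N ->
  ninv (set_nth 0%N (iota 1 n) i b) = (n - i.+1)%N.
Proof.
move=> hi hb; rewrite set_nth_iota // ninv_cat_lt; last first.
  move=> x y; rewrite mem_iota in_cons mem_iota; lia.
rewrite ninv_iota ninv_cons ninv_iota countall ?size_iota ?addn0 // => y.
rewrite mem_iota; lia.
Qed.

Lemma ninv_c j a : (j < n.-1)%N -> (a <= n)%N ->
  ninv (set_nth 0%N (iota n.+1 n.-1) j a) = j.
Proof.
move=> hj ha; rewrite set_nth_iota // ninv_cat ninv_iota ninv_cons ninv_iota.
rewrite count0; last by move=> y; rewrite mem_iota; lia.
rewrite big_seq (eq_bigr (fun _ => 1%N)) -?big_seq ?sum1_size ?size_iota //.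
move=> x; rewrite mem_iota => hx /=.
rewrite count0 ?addn0; first by have -> : (a < x)%N by lia.
by move=> y; rewrite mem_iota; lia.
Qed.

Lemma ninv_d a : (a <= n)%N -> ninv (rcons (iota n.+1 n.-1) a) = n.-1.
Proof.
move=> ha; rewrite ninv_rcons ninv_iota countall ?size_iota // => y.
rewrite mem_iota; lia.
Qed.

Lemma ninv_h i : (1 <= i <= n)%N -> ninv (rcons (rem i (iota 1 n)) i) = (n - i)%N.
Proof.
move=> hi; rewrite rem_iota // ninv_rcons ninv_dropi_iota dropi_iota count_cat.
rewrite count0; last by move=> y; rewrite mem_iota; lia.
rewrite countall ?size_iota; last by move=> y; rewrite mem_iota; lia.
lia.
Qed.

Lemma ninv_i i b : (1 <= i <= n)%N -> (n < b)%N ->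
  ninv (rcons (rem i (iota 1 n)) b) = 0%N.
Proof.
move=> hi hb; rewrite rem_iota // ninv_rcons ninv_dropi_iota count0 // => y.
rewrite dropi_iota mem_cat !mem_iota; lia.
Qed.

Lemma ninv_f i : (i <= n)%N -> ninv (i :: iota n.+1 n.-1) = 0%N.
Proof.
move=> hi; rewrite ninv_cons ninv_iota count0 // => y; rewrite mem_iota; lia.
Qed.

Lemma ninv_j k i : (i <= n)%N -> ninv (dropi k (i :: iota n.+1 n.-1)) = 0%N.
Proof.
move=> hi; case: k => [|k]; first by rewrite /dropi /= drop0 ninv_iota.
rewrite /dropi /= ninv_cons -/(dropi k _) ninv_dropi_iota count0 // => y.
rewrite dropi_iota mem_cat !mem_iota; lia.
Qed.

End Spec.

Local Open Scope ring_scope.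

Lemma sgnE a b k : a = (b + k.*2)%N -> (-1) ^+ a = (-1) ^+ b :> algC.
Proof. by move=> ->; rewrite -signr_odd oddD odd_double addbF signr_odd. Qed.

Lemma sgnE2 a b k l : (a + k.*2 = b + l.*2)%N -> (-1) ^+ a = (-1) ^+ b :> algC.
Proof.
move=> e; rewrite -signr_odd -[in RHS]signr_odd; congr (_ ^+ _).
by rewrite -(addbF (odd a)) -(odd_double k) -oddD e oddD odd_double addbF.
Qed.

Section Vec.
Variable n : nat.
Hypothesis hn : (2 <= n)%N.

Definition SetOf (s : seq nat) : {set 'I_(2 * n)} := [set k : 'I_(2 * n) | val k \in s].
Definition eA := evec (SetOf (iota 1 n)).
Definition eB (i : nat) := evec (SetOf (rcons (iota n.+1 n.-1) i.+1)).
Definition eS (i j : nat) := evec (SetOf (set_nth 0%N (iota 1 n) i (n.+1 + j))).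

Lemma coltE x y : colt n x y = (sgnseq x * sgnseq y) *: evec (SetOf x).
Proof. by []. Qed.

Lemma sA i : (i < n)%N -> SetOf (rcons (rem i.+1 (iota 1 n)) i.+1) = SetOf (iota 1 n).
Proof.
move=> hi; apply/setP => k; rewrite !inE mem_rcons in_cons rem_iota ?dropi_iota ?mem_cat ?mem_iota /=; lia.
Qed.

Lemma sB i : SetOf (i.+1 :: iota n.+1 n.-1) = SetOf (rcons (iota n.+1 n.-1) i.+1).
Proof. by apply/setP => k; rewrite !inE mem_rcons. Qed.

Lemma sS i j : (i < n)%N -> SetOf (rcons (rem i.+1 (iota 1 n)) (n.+1 + j)) =
  SetOf (set_nth 0%N (iota 1 n) i (n.+1 + j)).
Proof.
move=> hi; apply/setP => k; rewrite !inE mem_rcons in_cons rem_iota ?dropi_iota ?mem_cat ?mem_iota /=; last lia.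
rewrite set_nth_iota // mem_cat in_cons !mem_iota; lia.
Qed.

Lemma L1 : etaV n (vT_x n) (vT_y n) =
  (n.-1)%:R *: eA - \sum_(i < n) \sum_(j < n.-1) (-1) ^+ (n - i.+1 + j) *: eS i j.
Proof.
rewrite /etaV /vT_x /vT_y size_iota coltE /sgnseq !ninv_iota mulr1 scale1r.
congr (_ - _); rewrite size_iota exchange_big /= size_iota.
apply: eq_bigr => i _; apply: eq_bigr => j _.
rewrite coltE /sgnseq !nth_iota // ninv_b ?ninv_c //; try lia.
by rewrite -exprD.
Qed.

Lemma L2 : phiV n (vT_x n) (vT_y n) = eA - \sum_(i < n) (-1) ^+ i *: eB i.
Proof.
rewrite /phiV /vT_x /vT_y coltE /sgnseq !ninv_iota mulr1 scale1r size_iota.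
congr (_ - _); apply: eq_bigr => i _.
rewrite coltE /sgnseq ninv_dropi_iota nth_iota // add1n ninv_d // mulr1 scalerA -exprD.
by congr (_ *: _); move: (ltn_ord i) => hi; apply: (@sgnE _ _ (n - i.+1)%N); lia.
Qed.

Lemma L3 i : (i < n)%N -> phiV n (vR_x n i.+1) (vR_y n i.+1) =
  eB i - (-1) ^+ i *: eA - \sum_(j < n.-1) (-1) ^+ (n - j.+2) *: eS i j.
Proof.
move=> hi; rewrite /phiV /vR_x /vR_y coltE /sgnseq ninv_f // rem_iota ?ninv_dropi_iota; try lia.
rewrite -rem_iota; try lia.
rewrite mulr1 scale1r sB /=.
have -> : size (iota n.+1 n.-1) = n.-1 by rewrite size_iota.
rewrite big_ord_recl /= coltE /sgnseq ninv_h ?ninv_j //; try lia.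
rewrite mulr1 sA // opprD addrA; congr (_ - _ - _).
  rewrite scalerA -exprD; congr (_ *: _); apply: (@sgnE _ _ (n - i.+1)%N); lia.
apply: eq_bigr => j _; move: (ltn_ord j) => hj.
rewrite coltE /sgnseq ninv_i ?ninv_j ?nth_iota //; try lia.
rewrite mulr1 scale1r /bump /= add1n sS //.
by congr (_ *: _); congr (_ ^+ _); lia.
Qed.

End Vec.

Lemma alg2 (M : zmodType) (a p q b : M) : b - q = -(a - p + (p - (b + a) + q)).
Proof.
rewrite (addrA (a - p)) (addrA (a - p)) subrK (addrC b a) (opprD a b) addNKr opprD !opprK.
by rewrite addrC.
Qed.

Lemma shiftV n (F : nat -> V n) : \sum_(1 <= i < n.+1) F i = \sum_(i < n) F i.+1.
Proof. by rewrite big_add1 /= big_mkord. Qed.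

Theorem mainTheorem7 (n : nat) (hn : (2 <= n)%N) :
  etaV n (vT_x n) (vT_y n) =
  - (phiV n (vT_x n) (vT_y n) +
     \sum_(1 <= i < n.+1) (-1) ^+ (i - 1) *: phiV n (vR_x n i) (vR_y n i)).
Proof.
rewrite (L1 n hn) L2.
have -> : \sum_(1 <= i < n.+1) (-1) ^+ (i - 1) *: phiV n (vR_x n i) (vR_y n i) =
  \sum_(i < n) (-1) ^+ (i.+1 - 1) *: phiV n (vR_x n i.+1) (vR_y n i.+1).
  exact: shiftV.
rewrite [X in _ = - (_ + X)](eq_bigr (fun i : 'I_n => (-1) ^+ i *: eB n i - eA n +
   \sum_(j < n.-1) (-1) ^+ (n - i.+1 + j) *: eS n i j)); last first.
  move=> i _; rewrite ?subSS ?subn0 ?subn1 /= (L3 n hn) // scalerBr scalerBr scalerA -exprD.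
  rewrite (@sgnE (i + i) 0 i) ?expr0 ?scale1r; last lia.
  rewrite scaler_sumr -sumrN; congr (_ + _); apply: eq_bigr => j _.
  rewrite scalerA -scaleNr; congr (_ *: _).
  move: (ltn_ord i) (ltn_ord j) => hi hj.
  rewrite -exprD -mulN1r -exprS; apply: (@sgnE2 _ _ j i); lia.
rewrite big_split sumrB /= sumr_const card_ord.
rewrite -(prednK (ltnW hn)) mulrSr -scaler_nat (prednK (ltnW hn)).
  exact: alg2.
exact: hn.
Qed.
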